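(* Let $M$ be an $n$-counter Minsky machine and $k_1,\dots,k_n$ non-negative integers, and suppose $M$ can go from the initial configuration $(L_1,k_1,\dots,k_n)$ to the halting configuration $(L_0,0,\dots,0)$. Then there exists a tree-like Horn program $P$ which is a strong solution to the sequent $$l_1\otimes r_1^{k_1}\otimes\cdots\otimes r_n^{k_n},\ !\Phi_M,\ !\mathcal{K}\ \vdash\ l_0.$$
   Context: An $n$-counter Minsky machine $M$ has counters $x_1,\dots,x_n$ with non-negative integer values and a finite list of instructions labelled by labels $L_0,L_1,\dots$, each of one of the forms: (1) $L_i: x_m:=x_m+1$; goto $L_j$; (2) $L_i: x_m:=x_m-1$; goto $L_j$; (3) $L_i$: if $x_m>0$ then goto $L_j$; (4) $L_i$: if $x_m=0$ then goto $L_j$; (5) $L_0$: halt; where $i\ge 1$. A configuration is $(L,c_1,\dots,c_n)$; a computation is a finite sequence of configurations each obtained from the previous by applying an instruction of $M$ (an instruction at $L_i$ applies only in a configuration with label $L_i$; type (2) requires $x_m\ge1$, type (3) requires $x_m>0$, type (4) requires $x_m=0$). Encoding: distinct propositional literals $r_1,\dots,r_n$, $l_0,l_1,\dots$ (one per label), $\kappa_1,\dots,\kappa_n$. $r^k$ denotes the tensor of $k$ copies of $r$ (omitted when $k=0$). Instruction $I$ of type (1)–(4) gives: $\varphi_{(1)}=l_i\multimap(l_j\otimes r_m)$, $\varphi_{(2)}=(l_i\otimes r_m)\multimap l_j$, $\varphi_{(3)}=(l_i\otimes r_m)\multimap(l_j\otimes r_m)$, $\varphi_{(4)}=l_i\multimap(l_j\oplus\kappa_m)$.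 $\Phi_M$ is the multiset of $\varphi_I$ over the instructions $I$ of $M$ of types (1)–(4). $\mathcal{K}=\bigcup_{m=1}^n\mathcal{K}_m$, where $\mathcal{K}_m$ consists of $\kappa_m\multimap l_0$ and $(\kappa_m\otimes r_i)\multimap\kappa_m$ for all $i\neq m$. A tree-like Horn program is a finite rooted tree (each vertex at most two children) with edges labelled by Horn implications $X\multimap Y$ ($X,Y$ tensor products of one or more literals, $\otimes$ commutative and associative), such that each vertex with two outgoing edges has them labelled $X\multimap Y_1$, $X\multimap Y_2$ with the same $X$. For a product $W$: $\mathrm{OUT}(P,W,\text{root})=W$; for an edge $(v,w)$ labelled $X\multimap Y$, if $\mathrm{OUT}(P,W,v)$ equals $X\otimes V$ as multisets for some (possibly empty) product $V$, then $\mathrm{OUT}(P,W,w)=Y\otimes V$, else undefined. The formula used on an edge out of a one-child vertex is its label; on each edge out of a two-child vertex with labels $X\multimap Y_1$, $X\multimap Y_2$ it is $X\multimap(Y_1\oplus Y_2)$. $P$ is a strong solution to $W,\Delta,!\Gamma\vdash Z$ if every terminal vertex $w$ has $\mathrm{OUT}(P,W,w)$ defined and equal as a multiset to $Z$, every edge's used formula lies in $\Gamma$ or $\Delta$, and on every root-to-terminal path each formula of $\Delta$ (with multiplicity) is used exactly once. (Here $\Delta$ is empty.) *)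

(* Defs.v *)
From Stdlib Require Import List Permutation Arith Relations.
Import ListNotations.

(* Labels L_i are represented by their index i : nat; counters x_m by m : nat
   (1 <= m <= n). *)
Inductive instr : Type :=
| IInc  (i m j : nat)
| IDec  (i m j : nat)
| IJnz  (i m j : nat)
| IJz   (i m j : nat)
| IHalt.

Record minsky : Type := Minsky { mn : nat ; minstrs : list instr }.

Definition instr_wf (n : nat) (I : instr) : Prop :=
  match I with
  | IInc i m _ | IDec i m _ | IJnz i m _ | IJz i m _ => 1 <= i /\ 1 <= m <= n
  | IHalt => True
  end.

Definition minsky_wf (M : minsky) : Prop :=
  forall I, In I (minstrs M) -> instr_wf (mn M) I.

Definition config : Type := (nat * (nat -> nat))%type.

Definition upd (c : nat -> nat) (m v : nat) : nat -> nat :=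
  fun x => if Nat.eqb x m then v else c x.

Definition instr_step (I : instr) (a b : config) : Prop :=
  match I with
  | IInc i m j => fst a = i /\ fst b = j /\ snd b = upd (snd a) m (snd a m + 1)
  | IDec i m j => fst a = i /\ fst b = j /\ 1 <= snd a m
                  /\ snd b = upd (snd a) m (snd a m - 1)
  | IJnz i m j => fst a = i /\ fst b = j /\ 0 < snd a m /\ snd b = snd a
  | IJz  i m j => fst a = i /\ fst b = j /\ snd a m = 0 /\ snd b = snd a
  | IHalt => False
  end.

Definition mstep (M : minsky) (a b : config) : Prop :=
  exists I, In I (minstrs M) /\ instr_step I a b.

Definition reaches_halt (M : minsky) (k : nat -> nat) : Prop :=
  exists c, clos_refl_trans_1n config (mstep M) (1, k) (0, c)
            /\ forall m, 1 <= m <= mn M -> c m = 0.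

Inductive lit : Type :=
| r   (m : nat)
| l   (i : nat)
| kap (m : nat).

(* A tensor product of literals, as a multiset: a list up to permutation. *)
Definition product := list lit.

(* The formulas that can be "used" on an edge of a tree-like Horn program:
   X -o Y, and X -o (Y1 (+) Y2). *)
Inductive hformula : Type :=
| HImp   (X Y : product)
| HImpOr (X Y1 Y2 : product).

Definition hf_eq (f g : hformula) : Prop :=
  match f, g with
  | HImp X Y, HImp X' Y' => Permutation X X' /\ Permutation Y Y'
  | HImpOr X Y1 Y2, HImpOr X' Y1' Y2' =>
      Permutation X X' /\ Permutation Y1 Y1' /\ Permutation Y2 Y2'
  | _, _ => False
  end.

Definition phi (I : instr) : list hformula :=
  match I with
  | IInc i m j => [HImp [l i] [l j; r m]]
  | IDec i m j => [HImp [l i; r m] [l j]]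
  | IJnz i m j => [HImp [l i; r m] [l j; r m]]
  | IJz  i m j => [HImpOr [l i] [l j] [kap m]]
  | IHalt => []
  end.

Definition PhiM (M : minsky) : list hformula := flat_map phi (minstrs M).

Definition inK (n : nat) (f : hformula) : Prop :=
  exists m, 1 <= m <= n /\
    (f = HImp [kap m] [l 0] \/
     exists i, 1 <= i <= n /\ i <> m /\ f = HImp [kap m; r i] [kap m]).

Definition inGamma (M : minsky) (f : hformula) : Prop :=
  exists g, (In g (PhiM M) \/ inK (mn M) g) /\ hf_eq f g.

(* A rooted tree, each vertex with 0, 1 or 2 children; edges labelled by
   Horn implications X -o Y; the two edges out of a binary vertex are
   labelled X -o Y1 and X -o Y2 (same X). *)
Inductive hprog : Type :=
| PLeaf
| PNode1 (X Y : product) (t : hprog)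
| PNode2 (X Y1 Y2 : product) (t1 t2 : hprog).

Fixpoint hprog_wf (P : hprog) : Prop :=
  match P with
  | PLeaf => True
  | PNode1 X Y t => X <> [] /\ Y <> [] /\ hprog_wf t
  | PNode2 X Y1 Y2 t1 t2 =>
      X <> [] /\ Y1 <> [] /\ Y2 <> [] /\ hprog_wf t1 /\ hprog_wf t2
  end.

Fixpoint out_ok (Gam : hformula -> Prop) (P : hprog) (W Z : product) : Prop :=
  match P with
  | PLeaf => Permutation W Z
  | PNode1 X Y t =>
      Gam (HImp X Y) /\
      exists V, Permutation W (X ++ V) /\ out_ok Gam t (Y ++ V) Z
  | PNode2 X Y1 Y2 t1 t2 =>
      Gam (HImpOr X Y1 Y2) /\
      exists V, Permutation W (X ++ V) /\
                out_ok Gam t1 (Y1 ++ V) Z /\ out_ok Gam t2 (Y2 ++ V) Z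
  end.

(* P is a strong solution to  W, !Gamma |- Z  (Delta empty). *)
Definition strong_solution (Gam : hformula -> Prop) (P : hprog) (W Z : product)
  : Prop := hprog_wf P /\ out_ok Gam P W Z.

Definition rpow (m k : nat) : product := repeat (r m) k.

Definition init_product (n : nat) (k : nat -> nat) : product :=
  l 1 :: flat_map (fun m => rpow m (k m)) (seq 1 n).

(* Main.v *)
Require Import Defs.
From Stdlib Require Import List Permutation Arith Relations Lia.
Import ListNotations.

Definition FF (c : nat -> nat) (s : list nat) : product :=
  flat_map (fun x => rpow x (c x)) s.

Lemma FF_ext c1 c2 s : (forall x, In x s -> c1 x = c2 x) -> FF c1 s = FF c2 s.
Proof.
  induction s as [|a s IH]; intros H; simpl; auto.
  unfold FF in *; simpl. rewrite (H a) by (left; auto).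
  f_equal. apply IH. intros; apply H; right; auto.
Qed.

Lemma FF_zero c s : (forall x, In x s -> c x = 0) -> FF c s = [].
Proof.
  induction s as [|a s IH]; intros H; simpl; auto.
  unfold FF in *; simpl. rewrite (H a) by (left; auto). simpl.
  apply IH. intros; apply H; right; auto.
Qed.

Lemma FF_inc a b m s : NoDup s -> In m s -> (forall x, x <> m -> a x = b x) ->
  a m = b m + 1 -> Permutation (FF a s) (r m :: FF b s).
Proof.
  induction s as [|x s IH]; intros Hnd Hin Hab Hm; [destruct Hin|].
  inversion Hnd; subst. unfold FF in *; simpl.
  destruct (Nat.eq_dec x m) as [->|Hne].
  - rewrite Hm. assert (E : FF a s = FF b s) by (apply FF_ext; intros y Hy; apply Hab; intros ->; auto).
    unfold FF in E. rewrite E. unfold rpow. rewrite Nat.add_comm. simpl. apply Permutation_refl.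
  - destruct Hin as [Hx|Hin]; [congruence|].
    rewrite (Hab x Hne). eapply perm_trans.
    + apply Permutation_app_head. apply IH; auto.
    + apply Permutation_sym, Permutation_middle.
Qed.

Lemma out_ok_perm G P W W' Z : Permutation W W' -> out_ok G P W Z -> out_ok G P W' Z.
Proof.
  intros Hp. destruct P; simpl.
  - intros H. eapply perm_trans; [apply Permutation_sym, Hp|exact H].
  - intros [HG [V [H1 H2]]]. split; auto. exists V. split; auto.
    eapply perm_trans; [apply Permutation_sym, Hp|exact H1].
  - intros [HG [V [H1 H2]]]. split; auto. exists V. split; auto.
    eapply perm_trans; [apply Permutation_sym, Hp|exact H1].
Qed.

Lemma kill M m V : 1 <= m <= mn M ->
  (forall y, In y V -> exists x, y = r x /\ 1 <= x <= mn M /\ x <> m) ->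
  exists Q, strong_solution (inGamma M) Q (kap m :: V) [l 0].
Proof.
  intros Hm. induction V as [|y V IH]; intros HV.
  - exists (PNode1 [kap m] [l 0] PLeaf). split; simpl.
    + repeat split; try discriminate.
    + split.
      * exists (HImp [kap m] [l 0]). split; [right; exists m; split; auto|].
        simpl; split; apply Permutation_refl.
      * exists []. split; simpl; apply Permutation_refl.
  - destruct (HV y (or_introl eq_refl)) as [x [-> [Hx Hxm]]].
    destruct IH as [Q [Hw Ho]]. { intros; apply HV; right; auto. }
    exists (PNode1 [kap m; r x] [kap m] Q). split; simpl.
    + repeat split; try discriminate; auto.
    + split.
      * exists (HImp [kap m; r x] [kap m]). split.
        -- right. exists m. split; auto. right. exists x. auto.
        -- simpl; split; apply Permutation_refl.
      * exists V. split; [apply Permutation_refl|exact Ho].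
Qed.

Lemma inPhi M I g : In I (minstrs M) -> In g (phi I) -> inGamma M g.
Proof.
  intros HI Hg. exists g. split.
  - left. unfold PhiM. apply in_flat_map. eauto.
  - destruct g; simpl; repeat split; apply Permutation_refl.
Qed.

Lemma main M : minsky_wf M -> forall a b, clos_refl_trans_1n config (mstep M) a b ->
  fst b = 0 -> (forall m, 1 <= m <= mn M -> snd b m = 0) ->
  exists P, strong_solution (inGamma M) P (l (fst a) :: FF (snd a) (seq 1 (mn M))) [l 0].
Proof.
  intros Hwf a b H. induction H as [a|a y b Hs Hr IH]; intros Hb0 Hbc.
  - exists PLeaf. split; simpl; auto. rewrite Hb0.
    rewrite FF_zero. apply Permutation_refl.
    intros x Hx; apply in_seq in Hx; apply Hbc; lia.
  - destruct (IH Hb0 Hbc) as [P [Hw Ho]].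
    destruct Hs as [I [HI Hst]].
    pose proof (Hwf I HI) as HwI.
    destruct a as [i c], y as [j c2]. simpl in *.
    assert (Hnd : NoDup (seq 1 (mn M))) by apply seq_NoDup.
    destruct I as [i' m j'|i' m j'|i' m j'|i' m j'|]; simpl in Hst, HwI;
      try contradiction.
    + destruct Hst as [<- [<- ->]].
      exists (PNode1 [l i] [l j; r m] P). split; simpl.
      * repeat split; try discriminate; auto.
      * split. { eapply inPhi; eauto. simpl; auto. }
        exists (FF c (seq 1 (mn M))). split; [apply Permutation_refl|].
        eapply out_ok_perm; [|exact Ho]. simpl. apply perm_skip.
        apply FF_inc; auto.
        -- apply in_seq; lia.
        -- intros x Hx. unfold upd. destruct (Nat.eqb_spec x m); congruence.
        -- unfold upd. rewrite Nat.eqb_refl. auto.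
    + destruct Hst as [<- [<- [Hc ->]]].
      exists (PNode1 [l i; r m] [l j] P). split; simpl.
      * repeat split; try discriminate; auto.
      * split. { eapply inPhi; eauto. simpl; auto. }
        exists (FF (upd c m (c m - 1)) (seq 1 (mn M))). split; [|exact Ho].
        simpl. apply perm_skip. apply FF_inc; auto.
        -- apply in_seq; lia.
        -- intros x Hx. unfold upd. destruct (Nat.eqb_spec x m); congruence.
        -- unfold upd. rewrite Nat.eqb_refl. lia.
    + destruct Hst as [<- [<- [Hc ->]]].
      exists (PNode1 [l i; r m] [l j; r m] P). split; simpl.
      * repeat split; try discriminate; auto.
      * split. { eapply inPhi; eauto. simpl; auto. }
        assert (Hp : Permutation (FF c (seq 1 (mn M)))
                   (r m :: FF (upd c m (c m - 1)) (seq 1 (mn M)))).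
        { apply FF_inc; auto.
          -- apply in_seq; lia.
          -- intros x Hx. unfold upd. destruct (Nat.eqb_spec x m); congruence.
          -- unfold upd. rewrite Nat.eqb_refl. lia. }
        exists (FF (upd c m (c m - 1)) (seq 1 (mn M))). split.
        -- simpl. apply perm_skip. exact Hp.
        -- eapply out_ok_perm; [|exact Ho]. simpl. apply perm_skip. exact Hp.
    + destruct Hst as [<- [<- [Hc ->]]].
      destruct (kill M m (FF c (seq 1 (mn M)))) as [Q [Qw Qo]]; [lia| |].
      { intros y Hy. unfold FF in Hy. apply in_flat_map in Hy.
        destruct Hy as [x [Hx Hy]]. apply in_seq in Hx. unfold rpow in Hy.
        apply repeat_spec in Hy as Hy'. subst y. exists x. split; auto.
        split; [lia|]. intros ->. rewrite Hc in Hy. destruct Hy. }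
      exists (PNode2 [l i] [l j] [kap m] P Q). split; simpl.
      * repeat split; try discriminate; auto.
      * split. { eapply inPhi; eauto. simpl; auto. }
        exists (FF c (seq 1 (mn M))). split; [apply Permutation_refl|]. split; auto.
Qed.

Theorem lemma2 (M : minsky) (k : nat -> nat) :
  minsky_wf M ->
  reaches_halt M k ->
  exists P : hprog,
    strong_solution (inGamma M) P (init_product (mn M) k) [l 0].
Proof.
  intros Hwf [c [Hr Hc]].
  exact (main M Hwf _ _ Hr eq_refl Hc).
Qed.
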